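(* Let $(F_S,\iota)$ be an embedded local étale algebra and let $\Gamma\subseteq\mathrm{PGL}_2(F_S)$ be a discrete and cocompact subgroup. Then $\Gamma$ is plectic with set of distinguished limit points $\mathcal L_{\Gamma,S}=\mathbb P^1(F_S)=\prod_{\mathfrak p\in S}\mathbb P^1(F_\mathfrak p)$, i.e. one may take $\mathcal L_{\Gamma,\mathfrak p}=\mathbb P^1(F_\mathfrak p)$ for every $\mathfrak p\in S$.
   Context: Fix a prime $p$ and let $\mathbf{C}$ be the completion of an algebraic closure of $\mathbb{Q}_p$ or of $\mathbb{F}_p((T))$. An embedded local étale algebra $(F_S,\iota)$ consists of a finite non-empty set $S$, non-Archimedean local fields $F_\mathfrak p$ ($\mathfrak p\in S$) of residue characteristic $p$ and of the same characteristic as $\mathbf C$, and embeddings $\iota_\mathfrak p\colon F_\mathfrak p\hookrightarrow\mathbf C$, through which $\mathbb P^1(F_\mathfrak p)\subseteq\mathbb P^1(\mathbf C)$. $\mathrm{PGL}_2(F_S)=\prod_\mathfrak p\mathrm{PGL}_2(F_\mathfrak p)$ (a locally compact group) acts componentwise by Möbius transformations on $\mathbb P^1(\mathbf C_S)=\prod_{\mathfrak p\in S}\mathbb P^1(\mathbf C)$. For a subgroup $\Gamma$, its limit set $\mathcal L^S_\Gamma$ is the set of $x\in\mathbb P^1(\mathbf C_S)$ such that $\gamma_j(y)\to x$ for some $y\in\mathbb P^1(\mathbf C_S)$ and pairwise distinct $\gamma_j\in\Gamma$. $\Gamma$ is called plectic if there are subsets $\mathcal L_{\Gamma,\mathfrak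 p}\subseteq\mathbb P^1(F_\mathfrak p)$ with $\mathcal L^S_\Gamma=\bigcup_{\mathfrak p\in S}\big(\mathcal L_{\Gamma,\mathfrak p}\times\prod_{\mathfrak q\in S\setminus\{\mathfrak p\}}\mathbb P^1(\mathbf C)\big)$; then $\mathcal L_{\Gamma,S}:=\prod_\mathfrak p\mathcal L_{\Gamma,\mathfrak p}$ is the set of distinguished limit points. *)

(* Defs.v *)
From mathcomp Require Import all_boot all_order all_algebra.
From mathcomp Require Import reals.

Set Implicit Arguments.
Unset Strict Implicit.
Unset Printing Implicit Defensive.

Import Order.TTheory GRing.Theory Num.Theory.
Local Open Scope ring_scope.

Section ValuedField.
Variables (R : realType) (C : fieldType) (v : C -> R).

Definition nonarch_abs : Prop :=
  [/\ forall x, 0 <= v x,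
      forall x, v x = 0 <-> x = 0,
      forall x y, v (x * y) = v x * v y &
      forall x y, v (x + y) <= Num.max (v x) (v y)].

Definition cvg_to (u : nat -> C) (x : C) : Prop :=
  forall e : R, 0 < e -> exists N, forall n, (N <= n)%N -> v (u n - x) < e.

Definition cauchy_seq (u : nat -> C) : Prop :=
  forall e : R, 0 < e -> exists N, forall m n, (N <= m)%N -> (N <= n)%N ->
    v (u m - u n) < e.

Definition complete_abs : Prop :=
  forall u, cauchy_seq u -> exists x, cvg_to u x.

Definition vclosure (A : C -> Prop) (x : C) : Prop :=
  exists u : nat -> C, (forall n, A (u n)) /\ cvg_to u x.

Definition algebraic_over (K : C -> Prop) (x : C) : Prop :=
  exists P : {poly C}, P != 0 /\ (forall i, K P`_i) /\ root P x.

Definition vdense (A : C -> Prop) : Prop :=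
  forall x (e : R), 0 < e -> exists y, A y /\ v (x - y) < e.

Definition rational_elt (x : C) : Prop :=
  exists m n : int, n != 0 /\ x = m%:~R / n%:~R.

Definition prime_subfield_elt (x : C) : Prop := exists n : nat, x = n%:R.

Definition rat_fun_elt (T x : C) : Prop :=
  exists P Q : {poly C}, (forall i, prime_subfield_elt P`_i) /\
    (forall i, prime_subfield_elt Q`_i) /\ Q.[T] != 0 /\ x = P.[T] / Q.[T].

(* C is (isometric, up to normalisation, to) the completion of an algebraic
   closure of Q_p, resp. of F_p((T)):  Q_p = closure of Q in C, F_p((T)) =
   closure of F_p(T) in C, and the elements algebraic over it are dense in
   the complete algebraically closed field C. *)
Definition completed_alg_closure_Qp_or_FpT (p : nat) : Prop :=
  [/\ nonarch_abs, complete_abs, GRing.closed_field_axiom C &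
     ([pchar C] =i pred0 /\ v p%:R < 1 /\
        vdense (algebraic_over (vclosure rational_elt)))
  \/ (p \in [pchar C] /\ exists T, (0 < v T < 1) /\
        vdense (algebraic_over (vclosure (rat_fun_elt T))))].

Definition subfield (F : C -> Prop) : Prop :=
  [/\ F 0, F 1, forall x y, F x -> F y -> F (x - y),
      forall x y, F x -> F y -> F (x * y) &
      forall x, F x -> x != 0 -> F x^-1].

Definition increasing_nat (phi : nat -> nat) : Prop :=
  forall n, (phi n < phi n.+1)%N.

(* (the image under the embedding of) a non-Archimedean local field:
   a non-discrete, locally compact subfield of C for the induced topology *)
Definition local_subfield (F : C -> Prop) : Prop :=
  [/\ subfield F,
      exists x, F x /\ 0 < v x < 1 &
      exists r : R, 0 < r /\
        forall u : nat -> C, (forall n, F (u n) /\ v (u n) <= r) ->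
          exists phi, increasing_nat phi /\
            exists x, (F x /\ v x <= r) /\ cvg_to (u \o phi) x].

(* ---------- the projective line P^1(C): nonzero column vectors ---------- *)
Definition pc0 (x : 'cV[C]_2) : C := x ord0 ord0.
Definition pc1 (x : 'cV[C]_2) : C := x ord_max ord0.

(* chordal distance (independent of the chosen homogeneous coordinates) *)
Definition chordal (x y : 'cV[C]_2) : R :=
  v (pc0 x * pc1 y - pc1 x * pc0 y) /
    (Num.max (v (pc0 x)) (v (pc1 x)) * Num.max (v (pc0 y)) (v (pc1 y))).

Definition P1_cvg (u : nat -> 'cV[C]_2) (x : 'cV[C]_2) : Prop :=
  forall e : R, 0 < e -> exists N, forall n, (N <= n)%N -> chordal (u n) x < e.

Definition P1_in (F : C -> Prop) (x : 'cV[C]_2) : Prop :=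
  exists l : C, l != 0 /\ F (pc0 (l *: x)) /\ F (pc1 (l *: x)).

Variables (S : finType) (F : S -> C -> Prop).

Definition GL2S (g : S -> 'M[C]_2) : Prop :=
  forall s, \det (g s) != 0 /\ forall i j, F s (g s i j).

Definition mulS (g h : S -> 'M[C]_2) : S -> 'M[C]_2 := fun s => g s *m h s.
Definition invS (g : S -> 'M[C]_2) : S -> 'M[C]_2 := fun s => invmx (g s).

Definition central (g : S -> 'M[C]_2) : Prop := forall s, exists l : C, g s = l%:M.

(* g and h define the same element of PGL_2(F_S) *)
Definition proj_eq (g h : S -> 'M[C]_2) : Prop :=
  forall s, exists l : C, l != 0 /\ h s = l *: g s.

(* A subgroup of PGL_2(F_S) is represented by its full preimage in
   GL_2(F_S): a subgroup of GL_2(F_S) containing the centre. *)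
Definition PGL2_subgroup (G : (S -> 'M[C]_2) -> Prop) : Prop :=
  [/\ forall g, G g -> GL2S g,
      forall z, GL2S z -> central z -> G z,
      forall g h, G g -> G h -> G (mulS g h) &
      forall g, G g -> G (invS g)].

(* discreteness in PGL_2(F_S): some neighbourhood of 1 meets G only in the
   centre (the quotient map GL_2 -> PGL_2 is open). *)
Definition PGL2_discrete (G : (S -> 'M[C]_2) -> Prop) : Prop :=
  exists e : R, 0 < e /\ forall g, G g ->
    (forall s i j, v (g s i j - (1%:M : 'M[C]_2) i j) < e) -> central g.

Definition compactS (K : (S -> 'M[C]_2) -> Prop) : Prop :=
  forall u : nat -> (S -> 'M[C]_2), (forall n, K (u n)) ->
    exists phi, increasing_nat phi /\ exists k, K k /\
      forall s i j, cvg_to (fun n => u (phi n) s i j) (k s i j).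

(* cocompactness: G \ PGL_2(F_S) compact, i.e. GL_2(F_S) = G K, K compact *)
Definition PGL2_cocompact (G : (S -> 'M[C]_2) -> Prop) : Prop :=
  exists K : (S -> 'M[C]_2) -> Prop,
    [/\ forall k, K k -> GL2S k, compactS K &
        forall g, GL2S g -> exists gam k, [/\ G gam, K k & g = mulS gam k]].

Definition P1S_pt (x : S -> 'cV[C]_2) : Prop := forall s, x s != 0.

Definition limit_point (G : (S -> 'M[C]_2) -> Prop) (x : S -> 'cV[C]_2) : Prop :=
  exists y : S -> 'cV[C]_2, P1S_pt y /\
    exists gam : nat -> (S -> 'M[C]_2),
      [/\ forall j, G (gam j),
          forall i j, i != j -> ~ proj_eq (gam i) (gam j) &
          forall s, P1_cvg (fun j => gam j s *m y s) (x s)].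

Definition plectic_with (G : (S -> 'M[C]_2) -> Prop)
    (Lp : S -> 'cV[C]_2 -> Prop) : Prop :=
  (forall s x, Lp s x -> P1_in (F s) x) /\
  forall x, P1S_pt x -> (limit_point G x <-> exists s, Lp s (x s)).

End ValuedField.

(* Main.v *)
Require Import Defs.
From mathcomp Require Import all_boot all_order all_algebra.
From mathcomp Require Import reals.
From mathcomp Require Import ring lra.
From Stdlib Require Import Classical ClassicalEpsilon.
Set Implicit Arguments. Unset Strict Implicit. Unset Printing Implicit Defensive.
Import Order.TTheory GRing.Theory Num.Theory.
Local Open Scope ring_scope.


Lemma sum2 (K : nmodType) (f : 'I_2 -> K) : \sum_i f i = f ord0 + f ord_max.
Proof.
rewrite big_ord_recr big_ord_recr big_ord0 /= add0r; congr (f _ + f _); exact/val_inj.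
Qed.

Lemma lift00 : lift (ord0 : 'I_2) (0 : 'I_1) = ord_max. Proof. exact/val_inj. Qed.
Lemma liftM0 : lift (ord_max : 'I_2) (0 : 'I_1) = ord0. Proof. exact/val_inj. Qed.

Lemma det2 (K : comNzRingType) (A : 'M[K]_2) :
  \det A = A ord0 ord0 * A ord_max ord_max - A ord0 ord_max * A ord_max ord0.
Proof.
rewrite (expand_det_row _ ord0) sum2 /cofactor !det_mx11 !mxE /= lift00 liftM0.
by rewrite expr0 expr1 mul1r mulN1r mulrN.
Qed.


Section Val.
Variables (R : realType) (C : fieldType) (v : C -> R).
Hypothesis hv : nonarch_abs v.

Lemma v_ge0 x : 0 <= v x. Proof. by case: hv. Qed.
Lemma v_eq0 x : (v x == 0) = (x == 0).
Proof. case: hv => _ h _ _; apply/eqP/eqP; by move/h. Qed.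
Lemma v_neq0 x : x != 0 -> 0 < v x.
Proof. by move=> hx; rewrite lt_def v_ge0 v_eq0 hx. Qed.
Lemma vM x y : v (x * y) = v x * v y. Proof. by case: hv. Qed.
Lemma v_ultra x y : v (x + y) <= Num.max (v x) (v y). Proof. by case: hv. Qed.
Lemma v0 : v 0 = 0. Proof. by apply/eqP; rewrite v_eq0. Qed.
Lemma v1 : v 1 = 1.
Proof.
have h : v 1 * v 1 = v 1 * 1 by rewrite -vM !mulr1.
apply: (mulfI _ h); by rewrite v_eq0 oner_eq0.
Qed.
Lemma vN1 : v (-1) = 1.
Proof.
have h : v (-1) ^+ 2 = 1 by rewrite expr2 -vM mulrNN mulr1 v1.
have := v_ge0 (-1); move: h => /eqP; rewrite sqrf_eq1 => /orP[/eqP //|/eqP ->].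
by rewrite ler0N1.
Qed.
Lemma vN x : v (- x) = v x. Proof. by rewrite -mulN1r vM vN1 mul1r. Qed.
Lemma vB x y : v (x - y) = v (y - x). Proof. by rewrite -vN opprB. Qed.
Lemma vV x : v (x^-1) = (v x)^-1.
Proof.
have [->|hx] := eqVneq x 0; first by rewrite invr0 v0 invr0.
have hv0 : v x != 0 by rewrite v_eq0.
apply: (mulfI hv0); by rewrite -vM !mulfV // v1.
Qed.
Lemma vX x n : v (x ^+ n) = v x ^+ n.
Proof. by elim: n => [|n ih]; rewrite ?expr0 ?v1 // !exprS vM ih. Qed.
Lemma v_ultraB x y : v (x - y) <= Num.max (v x) (v y).
Proof. by rewrite -(vN y) v_ultra. Qed.
Lemma v_addle x y c : v x <= c -> v y <= c -> v (x + y) <= c.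
Proof. move=> h1 h2; apply: le_trans (v_ultra _ _) _; by rewrite ge_max h1 h2. Qed.
Lemma v_addlt x y c : v x < c -> v y < c -> v (x + y) < c.
Proof. move=> h1 h2; apply: le_lt_trans (v_ultra _ _) _; by rewrite gt_max h1 h2. Qed.
Lemma v_suble x y c : v x <= c -> v y <= c -> v (x - y) <= c.
Proof. by move=> h1 h2; apply: v_addle; rewrite ?vN. Qed.
Lemma v_sublt x y c : v x < c -> v y < c -> v (x - y) < c.
Proof. by move=> h1 h2; apply: v_addlt; rewrite ?vN. Qed.
Lemma v_eq_of_lt x y : v (x - y) < v y -> v x = v y.
Proof.
move=> h.
have h1 : v x <= v y.
  have -> : x = (x - y) + y by rewrite subrK.
  by apply: v_addle => //; apply: ltW.
apply/eqP; rewrite eq_le h1 /=.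
rewrite leNgt; apply/negP => hx.
have : v (x - (x - y)) < v y by apply: v_sublt.
by rewrite opprB addrC subrK ltxx.
Qed.
Lemma v_sum2 (f : 'I_2 -> C) c : (forall i, v (f i) <= c) -> v (\sum_i f i) <= c.
Proof. by move=> h; rewrite sum2; apply: v_addle. Qed.
Lemma v_sum2lt (f : 'I_2 -> C) c : (forall i, v (f i) < c) -> v (\sum_i f i) < c.
Proof. by move=> h; rewrite sum2; apply: v_addlt. Qed.

Definition ev (P : nat -> Prop) := exists N, forall n, (N <= n)%N -> P n.
Lemma ev_and P Q : ev P -> ev Q -> ev (fun n => P n /\ Q n).
Proof.
move=> [N1 h1] [N2 h2]; exists (maxn N1 N2) => n hn; split.
  by apply: h1; apply: leq_trans hn; apply: leq_maxl.
by apply: h2; apply: leq_trans hn; apply: leq_maxr.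
Qed.
Lemma ev_mono (P Q : nat -> Prop) : (forall n, P n -> Q n) -> ev P -> ev Q.
Proof. by move=> h [N hN]; exists N => n /hN /h. Qed.

Notation cvg := (cvg_to v).

Lemma cvg_ev u x e : cvg u x -> 0 < e -> ev (fun n => v (u n - x) < e).
Proof. by move=> h /h. Qed.

Lemma cvg_cst c : cvg (fun _ => c) c.
Proof. by move=> e he; exists 0%N => n _; rewrite subrr v0. Qed.

Lemma cvgD u w x y : cvg u x -> cvg w y -> cvg (fun n => u n + w n) (x + y).
Proof.
move=> hu hw e he; have [N hN] := ev_and (hu e he) (hw e he).
exists N => n /hN [h1 h2].
by rewrite opprD addrACA; apply: v_addlt.
Qed.
Lemma cvgN u x : cvg u x -> cvg (fun n => - u n) (- x).
Proof. by move=> hu e /hu [N hN]; exists N => n /hN; rewrite -opprD vN. Qed.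
Lemma cvgB u w x y : cvg u x -> cvg w y -> cvg (fun n => u n - w n) (x - y).
Proof. by move=> hu hw; apply: cvgD => //; apply: cvgN. Qed.

Lemma cvg_bnd u x : cvg u x -> ev (fun n => v (u n) <= v x + 1).
Proof.
move=> hu; apply: ev_mono (hu 1 ltr01) => n hn.
have -> : u n = (u n - x) + x by rewrite subrK.
apply: v_addle; first by apply: le_trans (ltW hn) _; rewrite lerDr v_ge0.
by rewrite lerDl ler01.
Qed.

Lemma prod_lt (a b B e : R) : 0 <= a -> a <= B -> 0 <= b -> b < e -> 0 < B -> a * b < B * e.
Proof.
move=> ha haB hb hbe hB; apply: le_lt_trans (_ : a * b <= B * b) _.
  exact: ler_wpM2r.
by rewrite ltr_pM2l.
Qed.

Lemma cvgM u w x y : cvg u x -> cvg w y -> cvg (fun n => u n * w n) (x * y).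
Proof.
move=> hu hw e he.
set B := v x + v y + 1.
have hB : 0 < B by rewrite ltr_wpDl ?addr_ge0 ?v_ge0.
have he' : 0 < e / B by rewrite divr_gt0.
have [N hN] := ev_and (ev_and (hu _ he') (hw _ he')) (cvg_bnd hw).
exists N => n /hN [[h1 h2] h3].
have -> : u n * w n - x * y = (u n - x) * w n + x * (w n - y).
  by rewrite mulrBl mulrBr addrA subrK.
have eB : B * (e / B) = e by rewrite mulrC divfK // gt_eqF.
apply: v_addlt; rewrite vM.
- rewrite mulrC -eB; apply: prod_lt; rewrite ?v_ge0 //.
  by apply: le_trans h3 _; rewrite /B lerD2r lerDr v_ge0.
- rewrite -eB; apply: prod_lt; rewrite ?v_ge0 //.
  by rewrite /B -addrA lerDl addr_ge0 ?v_ge0.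
Qed.

Lemma cvg_veq u x : cvg u x -> x != 0 -> ev (fun n => v (u n) = v x).
Proof.
move=> hu hx; apply: ev_mono (hu _ (v_neq0 hx)) => n hn.
exact: v_eq_of_lt.
Qed.

Lemma cvgV u x : cvg u x -> x != 0 -> cvg (fun n => (u n)^-1) x^-1.
Proof.
move=> hu hx e he.
have hvx := v_neq0 hx.
have he' : 0 < e * (v x * v x) by rewrite !mulr_gt0.
have [N hN] := ev_and (hu _ he') (cvg_veq hu hx).
exists N => n /hN [h1 h2].
have hun : u n != 0 by rewrite -v_eq0 h2 gt_eqF.
have -> : (u n)^-1 - x^-1 = (x - u n) * ((u n)^-1 * x^-1) by field; apply/andP.
rewrite vM vM !vV h2 vB -invfM ltr_pdivrMr ?mulr_gt0 //.
Qed.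

Lemma cvg_evq u w x : ev (fun n => u n = w n) -> cvg u x -> cvg w x.
Proof.
move=> he hu e /hu h; have [N hN] := ev_and he h.
by exists N => n /hN [<-].
Qed.

Lemma cvg_sub u x (phi : nat -> nat) : (forall n, (n <= phi n)%N) -> cvg u x ->
  cvg (fun n => u (phi n)) x.
Proof.
move=> hphi hu e /hu [N hN]; exists N => n hn; apply: hN.
exact: leq_trans hn (hphi n).
Qed.

Lemma cvg_le u x c : (forall n, v (u n) <= c) -> cvg u x -> v x <= c.
Proof.
move=> hc hu; rewrite leNgt; apply/negP => hx.
have hc0 : 0 <= c by apply: le_trans (v_ge0 (u 0%N)) (hc 0%N).
have hxc : 0 < v x - c by rewrite subr_gt0.
have [N hN] := hu _ hxc.
have h := hN N (leqnn N).
have h' : v (u N - x) < v x by apply: lt_le_trans h _; rewrite lerBlDr lerDl.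
move/v_eq_of_lt: h' => e; have := hc N; by rewrite e leNgt hx.
Qed.

Lemma cvg_evlt u x c : cvg u x -> v x < c -> ev (fun n => v (u n) < c).
Proof.
move=> hu hxc.
have hc : 0 < c by apply: le_lt_trans (v_ge0 x) hxc.
apply: ev_mono (hu _ hc) => n hn.
have -> : u n = (u n - x) + x by rewrite subrK.
exact: v_addlt.
Qed.

Lemma cvg0_le u w : (forall n, v (w n) <= v (u n)) -> cvg u 0 -> cvg w 0.
Proof.
move=> h hu e /hu [N hN]; exists N => n /hN; rewrite !subr0 => h'.
exact: le_lt_trans (h n) h'.
Qed.

End Val.


Lemma pow_small (R : realType) (q r : R) : 0 <= q -> q < 1 -> 0 < r ->
  exists k, q ^+ k <= r.
Proof.
move=> hq0 hq1 hr.
have [->|hq] := eqVneq q 0; first by exists 1%N; rewrite expr1 ltW.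
have hqp : 0 < q by rewrite lt_def hq hq0.
set h := q^-1 - 1.
have hh : 0 < h by rewrite /h subr_gt0 invf_gt1.
have bern : forall k : nat, 1 + k%:R * h <= (1 + h) ^+ k.
  elim=> [|k ih]; first by rewrite mul0r addr0 expr0.
  rewrite exprS -natr1 mulrDl mul1r.
  have h0 : 0 <= k%:R * h by rewrite mulr_ge0 ?ler0n ?ltW.
  apply: le_trans (_ : (1 + h) * (1 + k%:R * h) <= _); last first.
    by apply: ler_wpM2l => //; rewrite addr_ge0 // ?ltW.
  nra.
have hb : 0 <= (r * h)^-1 by rewrite invr_ge0 mulr_ge0 ?ltW.
have := archi_boundP hb.
set k := Num.bound _ => hk.
exists k.
have e1 : 1 + h = q^-1 by rewrite /h addrC subrK.
have h2 : r^-1 < k%:R * h by rewrite -ltr_pdivrMr // -invfM.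
have h3 : r^-1 < (1 + h) ^+ k.
  apply: lt_le_trans h2 _; apply: le_trans (bern k); by rewrite lerDr.
by move: h3; rewrite e1 exprVn ltf_pV2 ?posrE ?exprn_gt0 // => /ltW.
Qed.

Section Sub.
Variables (C : fieldType) (F : C -> Prop).
Hypothesis hF : subfield F.
Lemma F0 : F 0. Proof. by case: hF. Qed.
Lemma F1 : F 1. Proof. by case: hF. Qed.
Lemma FB x y : F x -> F y -> F (x - y). Proof. by case: hF => _ _ h _ _; apply: h. Qed.
Lemma FM x y : F x -> F y -> F (x * y). Proof. by case: hF => _ _ _ h _; apply: h. Qed.
Lemma FV x : F x -> F x^-1.
Proof.
have [->|hx] := eqVneq x 0; first by rewrite invr0.
by case: hF => _ _ _ _ h /h; apply.
Qed.
Lemma FN x : F x -> F (- x). Proof. by move=> h; rewrite -sub0r; apply: FB => //; apply: F0. Qed.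
Lemma FD x y : F x -> F y -> F (x + y).
Proof. by move=> h1 h2; rewrite -(opprK y); apply: FB => //; apply: FN. Qed.
Lemma FX x n : F x -> F (x ^+ n).
Proof. by move=> h; elim: n => [|n ih]; [rewrite expr0; apply: F1 | rewrite exprS; apply: FM]. Qed.
Lemma Fsum2 (f : 'I_2 -> C) : (forall i, F (f i)) -> F (\sum_i f i).
Proof. by move=> h; rewrite sum2; apply: FD. Qed.
End Sub.

Lemma inc_ge (phi : nat -> nat) : increasing_nat phi -> forall n, (n <= phi n)%N.
Proof.
move=> h; elim=> [|n ih] //; apply: leq_ltn_trans ih (h n).
Qed.
Lemma inc_lt (phi : nat -> nat) : increasing_nat phi -> forall m n, (m < n)%N -> (phi m < phi n)%N.
Proof. by move=> h m n; apply: (homo_ltn ltn_trans). Qed.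
Lemma inc_comp (phi psi : nat -> nat) : increasing_nat phi -> increasing_nat psi ->
  increasing_nat (fun n => phi (psi n)).
Proof. by move=> h1 h2 n; apply: inc_lt. Qed.
Lemma phi_inc_inj (phi : nat -> nat) : increasing_nat phi -> injective phi.
Proof.
move=> h m n e; case: (ltngtP m n) => // hmn.
  by have := inc_lt h hmn; rewrite e ltnn.
by have := inc_lt h hmn; rewrite e ltnn.
Qed.

Section Compact.
Variables (R : realType) (C : fieldType) (v : C -> R).
Hypothesis hv : nonarch_abs v.
Notation cvg := (cvg_to v).

Lemma small_elt F r : local_subfield v F -> 0 < r -> exists c, [/\ F c, c != 0 & v c <= r].
Proof.
case=> hF [pi [Fpi /andP[h0 h1]]] _ hr.
have [k hk] := pow_small (ltW h0) h1 hr.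
exists (pi ^+ k); split; first exact: FX.
  by rewrite expf_neq0 // -(v_eq0 hv) gt_eqF.
by rewrite (vX hv).
Qed.

Lemma ball1_compact F u : local_subfield v F -> (forall n, F (u n) /\ v (u n) <= 1) ->
  exists phi, increasing_nat phi /\
    exists x, (F x /\ v x <= 1) /\ cvg (fun n => u (phi n)) x.
Proof.
move=> hl hu; have hl' := hl; case: hl' => hF _ [r [hr hcomp]].
have [c [Fc c0 vc]] := small_elt hl hr.
have hb : forall n, F (c * u n) /\ v (c * u n) <= r.
  move=> n; split; first by apply: (FM hF Fc); case: (hu n).
  rewrite (vM hv); apply: le_trans (_ : v c * 1 <= _); last by rewrite mulr1.
  by rewrite ler_wpM2l ?(v_ge0 hv) //; case: (hu n).
have [phi [hphi [x [[Fx _] hx]]]] := hcomp (fun n => c * u n) hb.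
exists phi; split => //; exists (c^-1 * x).
have hc : cvg (fun n => u (phi n)) (c^-1 * x).
  apply: (cvg_evq (u := fun n => c^-1 * (c * u (phi n)))).
    by exists 0%N => n _; rewrite mulrA mulVf // mul1r.
  by apply: (cvgM hv (cvg_cst hv _)).
split => //; split; first by apply: (FM hF); [apply: (FV hF) | ].
by apply: (cvg_le hv _ hc) => n; case: (hu (phi n)).
Qed.
Lemma fam_compact (I : finType) (Fi : I -> C -> Prop) (u : I -> nat -> C) :
  (forall i, local_subfield v (Fi i)) -> (forall i n, Fi i (u i n) /\ v (u i n) <= 1) ->
  exists phi, increasing_nat phi /\ forall i, exists x,
    (Fi i x /\ v x <= 1) /\ cvg (fun n => u i (phi n)) x.
Proof.
move=> hl hu.
suff: forall l : seq I, exists phi, increasing_nat phi /\ forall i, i \in l -> exists x,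
    (Fi i x /\ v x <= 1) /\ cvg (fun n => u i (phi n)) x.
  by case/(_ (enum I)) => phi [hphi h]; exists phi; split => // i; apply: h; rewrite mem_enum.
elim=> [|i l [phi [hphi ih]]].
  by exists id; split => // n.
have [psi [hpsi [x [hx hc]]]] := ball1_compact (hl i) (fun n => hu i (phi n)).
exists (fun n => phi (psi n)); split; first exact: inc_comp.
move=> j; rewrite in_cons => /orP[/eqP -> | hj]; first by exists x.
have [y [hy hcy]] := ih j hj; exists y; split => //.
exact: (cvg_sub (u := fun n => u j (phi n)) (inc_ge hpsi) hcy).
Qed.
End Compact.


Lemma I2_cases (i : 'I_2) : i = ord0 \/ i = ord_max.
Proof. case: i => [[|[|k]] hk]; [left|right|by []]; exact/val_inj. Qed.

Definition mkv (C : fieldType) (a b : C) : 'cV[C]_2 :=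
  \col_(i < 2) (if i == ord0 then a else b).
Lemma mkv0 (C : fieldType) (a b : C) : pc0 (mkv a b) = a. Proof. by rewrite /pc0 mxE. Qed.
Lemma mkv1 (C : fieldType) (a b : C) : pc1 (mkv a b) = b. Proof. by rewrite /pc1 mxE. Qed.

Lemma cV2_eq (C : fieldType) (x y : 'cV[C]_2) : pc0 x = pc0 y -> pc1 x = pc1 y -> x = y.
Proof.
move=> h0 h1; apply/matrixP => i j; rewrite (ord1 j).
by case: (I2_cases i) => ->.
Qed.
Lemma cV_neq0 (C : fieldType) (x : 'cV[C]_2) : x != 0 -> pc0 x != 0 \/ pc1 x != 0.
Proof.
move=> hx; case: (eqVneq (pc0 x) 0) => h0; last by left.
case: (eqVneq (pc1 x) 0) => h1; last by right.
exfalso; move/eqP: hx; apply; apply: cV2_eq.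
  by rewrite h0 /pc0 mxE.
by rewrite h1 /pc1 mxE.
Qed.
Lemma pcZ0 (C : fieldType) (l : C) x : pc0 (l *: x) = l * pc0 x. Proof. by rewrite /pc0 mxE. Qed.
Lemma pcZ1 (C : fieldType) (l : C) x : pc1 (l *: x) = l * pc1 x. Proof. by rewrite /pc1 mxE. Qed.
Lemma pcM0 (C : fieldType) (g : 'M[C]_2) y :
  pc0 (g *m y) = g ord0 ord0 * pc0 y + g ord0 ord_max * pc1 y.
Proof. by rewrite /pc0 mxE sum2. Qed.
Lemma pcM1 (C : fieldType) (g : 'M[C]_2) y :
  pc1 (g *m y) = g ord_max ord0 * pc0 y + g ord_max ord_max * pc1 y.
Proof. by rewrite /pc1 mxE sum2. Qed.

Section Chord.
Variables (R : realType) (C : fieldType) (v : C -> R).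
Hypothesis hv : nonarch_abs v.
Notation cvg := (cvg_to v).

Definition nv (x : 'cV[C]_2) := Num.max (v (pc0 x)) (v (pc1 x)).
Definition cr (x y : 'cV[C]_2) := pc0 x * pc1 y - pc1 x * pc0 y.
Definition mcvg m n (A : nat -> 'M[C]_(m, n)) (B : 'M[C]_(m, n)) :=
  forall i j, cvg (fun k => A k i j) (B i j).

Lemma chordalE x y : chordal v x y = v (cr x y) / (nv x * nv y). Proof. by []. Qed.
Lemma nv_ge0 x : 0 <= nv x. Proof. by rewrite le_max v_ge0. Qed.
Lemma nv_ge_0 x : v (pc0 x) <= nv x. Proof. by rewrite le_max lexx. Qed.
Lemma nv_ge_1 x : v (pc1 x) <= nv x. Proof. by rewrite le_max lexx orbT. Qed.
Lemma nv_gt0 x : x != 0 -> 0 < nv x.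
Proof.
case/cV_neq0 => h.
  by apply: lt_le_trans (nv_ge_0 x); apply: v_neq0.
by apply: lt_le_trans (nv_ge_1 x); apply: v_neq0.
Qed.
Lemma nvZ l x : nv (l *: x) = v l * nv x.
Proof. by rewrite /nv pcZ0 pcZ1 !(vM hv) maxr_pMr // v_ge0. Qed.
Lemma crZl l x y : cr (l *: x) y = l * cr x y.
Proof. rewrite /cr pcZ0 pcZ1; ring. Qed.
Lemma chordalZl l x y : l != 0 -> chordal v (l *: x) y = chordal v x y.
Proof.
move=> hl; rewrite !chordalE crZl nvZ (vM hv) -[v l * nv x * nv y]mulrA -mulf_div divff ?mul1r //.
by rewrite (v_eq0 hv).
Qed.

Lemma P1_cvg_sub u x (phi : nat -> nat) : (forall n, (n <= phi n)%N) ->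
  P1_cvg v u x -> P1_cvg v (fun n => u (phi n)) x.
Proof.
move=> hphi hu e /hu [N hN]; exists N => n hn; apply: hN.
exact: leq_trans hn (hphi n).
Qed.

Lemma nv_ev (w : nat -> 'cV[C]_2) W : mcvg w W -> W != 0 ->
  ev (fun n => nv (w n) = nv W).
Proof.
move=> hw hW; have hm := nv_gt0 hW.
apply: ev_mono (ev_and (hw ord0 ord0 _ hm) (hw ord_max ord0 _ hm)) => n [h0 h1].
rewrite -/(pc0 (w n)) -/(pc0 W) in h0; rewrite -/(pc1 (w n)) -/(pc1 W) in h1.
have le0 : v (pc0 (w n)) <= nv W.
  rewrite -(subrK (pc0 W) (pc0 (w n))); apply: (v_addle hv); [exact: ltW|exact: nv_ge_0].
have le1 : v (pc1 (w n)) <= nv W.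
  rewrite -(subrK (pc1 W) (pc1 (w n))); apply: (v_addle hv); [exact: ltW|exact: nv_ge_1].
apply/eqP; rewrite eq_le ge_max le0 le1 /=.
rewrite {1}/nv; case: (leP (v (pc0 W)) (v (pc1 W))) => hc.
  rewrite -(v_eq_of_lt hv (x := pc1 (w n))) ?nv_ge_1 //.
  by apply: lt_le_trans h1 _; rewrite /nv max_r.
rewrite -(v_eq_of_lt hv (x := pc0 (w n))) ?nv_ge_0 //.
by apply: lt_le_trans h0 _; rewrite /nv max_l // ltW.
Qed.

Lemma cr_diff w W x d : v (pc0 w - pc0 W) < d -> v (pc1 w - pc1 W) < d -> 0 < nv x ->
  v (cr w x - cr W x) < d * nv x.
Proof.
move=> h0 h1 hx.
have -> : cr w x - cr W x = (pc0 w - pc0 W) * pc1 x - (pc1 w - pc1 W) * pc0 x.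
  rewrite /cr; ring.
apply: (v_sublt hv); rewrite (vM hv).
  apply: le_lt_trans (_ : _ <= v (pc0 w - pc0 W) * nv x) _.
    by rewrite ler_wpM2l ?v_ge0 ?nv_ge_1.
  by rewrite ltr_pM2r.
apply: le_lt_trans (_ : _ <= v (pc1 w - pc1 W) * nv x) _.
  by rewrite ler_wpM2l ?v_ge0 ?nv_ge_0.
by rewrite ltr_pM2r.
Qed.

Lemma chord_cvg0 (w : nat -> 'cV[C]_2) W x : mcvg w W -> W != 0 -> x != 0 ->
  cr W x = 0 -> P1_cvg v w x.
Proof.
move=> hw hW hx hc e he.
have hm := nv_gt0 hW; have hnx := nv_gt0 hx.
have hd : 0 < e * nv W by rewrite mulr_gt0.
have [N hN] := ev_and (ev_and (hw ord0 ord0 _ hd) (hw ord_max ord0 _ hd)) (nv_ev hw hW).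
exists N => n /hN [[h0 h1] h2].
rewrite chordalE h2 ltr_pdivrMr ?mulr_gt0 // mulrA.
by have := cr_diff h0 h1 hnx; rewrite hc subr0.
Qed.

Lemma chord_lim0 (w : nat -> 'cV[C]_2) W x : mcvg w W -> W != 0 -> x != 0 ->
  P1_cvg v w x -> cr W x = 0.
Proof.
move=> hw hW hx hc; apply/eqP; rewrite -(v_eq0 hv); apply: contraT => hc0.
have hm := nv_gt0 hW; have hnx := nv_gt0 hx.
have hcp : 0 < v (cr W x) by rewrite lt_def hc0 v_ge0.
have hd : 0 < v (cr W x) / nv x by rewrite divr_gt0.
have he : 0 < v (cr W x) / (nv W * nv x) by rewrite divr_gt0 ?mulr_gt0.
have [N hN] := ev_and (ev_and (hw ord0 ord0 _ hd) (hw ord_max ord0 _ hd))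
  (ev_and (nv_ev hw hW) (hc _ he)).
have [[h0 h1] [h2 h3]] := hN N (leqnn N).
have h4 := cr_diff h0 h1 hnx; rewrite divfK ?gt_eqF // in h4.
move: h3; rewrite chordalE h2 ltr_pM2r ?invr_gt0 ?mulr_gt0 // => h3.
have : v (cr (w N) x - (cr (w N) x - cr W x)) < v (cr W x) by apply: (v_sublt hv).
by rewrite opprB addrC subrK ltxx.
Qed.

End Chord.


Lemma invmx_entry (C : fieldType) (A : 'M[C]_2) i j : A \in unitmx ->
  invmx A i j = (\det A)^-1 * ((-1) ^+ (j + i) * A (lift j 0) (lift i 0)).
Proof.
by move=> hA; rewrite /invmx hA !mxE /cofactor det_mx11 !mxE.
Qed.

Section Mat.
Variables (R : realType) (C : fieldType) (v : C -> R).
Hypothesis hv : nonarch_abs v.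
Notation cvg := (cvg_to v).
Notation mcvg := (mcvg v).

Lemma ev_all (I : finType) (P : I -> nat -> Prop) : (forall i, ev (P i)) ->
  ev (fun n => forall i, P i n).
Proof.
move=> h.
suff: forall l : seq I, ev (fun n => forall i, i \in l -> P i n).
  by move/(_ (enum I)) => [N hN]; exists N => n /hN hn i; apply: hn; rewrite mem_enum.
elim=> [|i l ih]; first by exists 0%N.
apply: ev_mono (ev_and (h i) ih) => n [h1 h2] j; rewrite in_cons => /orP[/eqP -> //|].
exact: h2.
Qed.

Lemma mcvg_cst m n (B : 'M[C]_(m, n)) : mcvg (fun _ => B) B.
Proof. by move=> i j; apply: cvg_cst. Qed.

Lemma mcvg_mul m p (A : nat -> 'M[C]_(m, 2)) (B : nat -> 'M[C]_(2, p)) A' B' :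
  mcvg A A' -> mcvg B B' -> mcvg (fun k => A k *m B k) (A' *m B').
Proof.
move=> hA hB i j.
apply: (cvg_evq (u := fun k => A k i ord0 * B k ord0 j + A k i ord_max * B k ord_max j)).
  by exists 0%N => k _; rewrite mxE sum2.
rewrite mxE sum2; apply: (cvgD hv); apply: (cvgM hv); [apply: hA|apply: hB|apply: hA|apply: hB].
Qed.

Lemma mcvg_sub m n (A : nat -> 'M[C]_(m, n)) B (phi : nat -> nat) :
  (forall n, (n <= phi n)%N) -> mcvg A B -> mcvg (fun k => A (phi k)) B.
Proof. by move=> hphi hA i j; apply: (cvg_sub (u := fun k => A k i j)). Qed.

Lemma mcvg_det (A : nat -> 'M[C]_2) M : mcvg A M -> cvg (fun k => \det (A k)) (\det M).
Proof.
move=> hA.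
apply: (cvg_evq (u := fun k => A k ord0 ord0 * A k ord_max ord_max
   - A k ord0 ord_max * A k ord_max ord0)).
  by exists 0%N => k _; rewrite det2.
rewrite det2; apply: (cvgB hv); apply: (cvgM hv); apply: hA.
Qed.

Lemma ev_unit (A : nat -> 'M[C]_2) M : mcvg A M -> \det M != 0 ->
  ev (fun k => A k \in unitmx).
Proof.
move=> hA hM; apply: ev_mono (cvg_veq hv (mcvg_det hA) hM) => k hk.
by rewrite unitmxE unitfE -(v_eq0 hv) hk (v_eq0 hv).
Qed.

Lemma mcvg_inv (A : nat -> 'M[C]_2) M : mcvg A M -> \det M != 0 ->
  mcvg (fun k => invmx (A k)) (invmx M).
Proof.
move=> hA hM i j.
apply: (cvg_evq (u := fun k => (\det (A k))^-1 * ((-1) ^+ (j + i) * A k (lift j 0) (lift i 0)))).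
  by apply: ev_mono (ev_unit hA hM) => k hk; rewrite invmx_entry.
rewrite invmx_entry ?unitmxE ?unitfE //.
apply: (cvgM hv); first by apply: (cvgV hv) => //; apply: mcvg_det.
by apply: (cvgM hv); [apply: cvg_cst | apply: hA].
Qed.

Lemma near1 (A : nat -> 'M[C]_2) M e : mcvg A M -> \det M != 0 -> 0 < e ->
  exists N, forall i j, (N <= i)%N -> (N <= j)%N -> forall a b,
    v ((invmx (A i) *m A j) a b - (1%:M : 'M[C]_2) a b) < e.
Proof.
move=> hA hM he.
have hI := mcvg_inv hA hM.
pose K (a k : 'I_2) := v (invmx M a k) + 1.
have hK a k : 0 < K a k by rewrite /K ltr_wpDl ?v_ge0.
have hev : ev (fun n => A n \in unitmx /\ forall t : 'I_2 * 'I_2 * 'I_2,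
    v (invmx (A n) t.1.1 t.1.2) <= K t.1.1 t.1.2 /\
    v (A n t.1.2 t.2 - M t.1.2 t.2) < e / K t.1.1 t.1.2).
  apply: ev_and; first exact: ev_unit hA hM.
  apply: (ev_all (I := ('I_2 * 'I_2 * 'I_2)%type) (P := fun t n =>
    v (invmx (A n) t.1.1 t.1.2) <= K t.1.1 t.1.2 /\
    v (A n t.1.2 t.2 - M t.1.2 t.2) < e / K t.1.1 t.1.2)) => [[[a k] b]] /=.
  apply: ev_and.
    exact: (cvg_bnd hv (hI a k)).
  by apply: hA; rewrite divr_gt0.
have [N hN] := hev; exists N => i j hi hj a b.
have [hui hi'] := hN i hi; have [_ hj'] := hN j hj.
have -> : (invmx (A i) *m A j) a b - (1%:M : 'M[C]_2) a b
    = (invmx (A i) *m (A j - A i)) a b.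
  by rewrite mulmxBr mulVmx // !mxE.
have key : forall k, v (invmx (A i) a k * (A j - A i) k b) < e.
  move=> k; rewrite !mxE (vM hv).
  have [h1 h2] := hi' (a, k, b); have [_ h3] := hj' (a, k, b); simpl in *.
  have h4 : v (A j k b - A i k b) < e / K a k.
    rewrite -(subrKA (M k b)) -opprB; apply: (v_addlt hv); first by rewrite (vN hv) (vB hv).
    by rewrite (vB hv).
  have eK : e = K a k * (e / K a k) by rewrite mulrC divfK // gt_eqF.
  rewrite [X in _ < X]eK.
  exact: (prod_lt (v_ge0 hv _) h1 (v_ge0 hv _) h4 (hK a k)).
rewrite mxE sum2; apply: (v_addlt hv); apply: key.
Qed.

End Mat.


Lemma mkv_neq0 (C : fieldType) (a b : C) : a != 0 \/ b != 0 -> mkv a b != 0.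
Proof.
case=> h; apply/eqP => e; move: h.
  by rewrite -(mkv0 a b) e /pc0 mxE eqxx.
by rewrite -(mkv1 a b) e /pc1 mxE eqxx.
Qed.

Section P1.
Variables (R : realType) (C : fieldType) (v : C -> R).
Hypothesis hv : nonarch_abs v.
Notation cvg := (cvg_to v).
Notation mcvg := (mcvg v).

Lemma normalize (I : finType) (F : C -> Prop) (f : I -> C) i1 : subfield F ->
  (forall i, F (f i)) -> f i1 != 0 ->
  exists c, [/\ F c, c != 0, forall i, v (c * f i) <= 1 & exists i, v (c * f i) = 1].
Proof.
move=> hF hf hi1.
case: (@Order.TotalTheory.arg_maxP _ _ I i1 xpredT (fun i => v (f i)) isT) => i0 _ hmax.
have hp : 0 < v (f i0) by apply: lt_le_trans (v_neq0 hv hi1) (hmax i1 isT).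
have hi0 : f i0 != 0 by rewrite -(v_eq0 hv) gt_eqF.
exists (f i0)^-1; split.
- exact: (FV hF).
- by rewrite invr_neq0.
- move=> i; rewrite (vM hv) (vV hv) mulrC ler_pdivrMr // mul1r; exact: hmax.
- by exists i0; rewrite mulVf // v1.
Qed.

Section F.
Variable F : C -> Prop.
Hypothesis hF : subfield F.

Lemma P1_of_prop u x : F (pc0 u) -> F (pc1 u) -> u != 0 -> x != 0 -> cr u x = 0 ->
  P1_in F x.
Proof.
move=> h0 h1 hu hx; rewrite /cr => /eqP; rewrite subr_eq0 => /eqP e.
case: (eqVneq (pc0 x) 0) => hx0.
  have hx1 : pc1 x != 0 by case: (cV_neq0 hx) => //; rewrite hx0 eqxx.
  have hu0 : pc0 u = 0 by move: e; rewrite hx0 mulr0 => /eqP; rewrite mulf_eq0 (negbTE hx1) orbF => /eqP.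
  have hu1 : pc1 u != 0 by case: (cV_neq0 hu) => //; rewrite hu0 eqxx.
  exists (pc1 u / pc1 x); split; [|split]; first by rewrite mulf_neq0 ?invr_neq0.
    by rewrite pcZ0 hx0 mulr0; apply: (F0 hF).
  by rewrite pcZ1 divfK.
have hu0 : pc0 u != 0.
  apply/eqP => hu0; move: e; rewrite hu0 mul0r => /esym/eqP; rewrite mulf_eq0 (negbTE hx0) orbF => hu1.
  by case: (cV_neq0 hu) => h; move: h; rewrite ?hu0 ?(eqP hu1) eqxx.
exists (pc0 u / pc0 x); split; [|split]; first by rewrite mulf_neq0 ?invr_neq0.
  by rewrite pcZ0 divfK.
by rewrite pcZ1 mulrAC e mulfK.
Qed.

Lemma P1_to_prop x : P1_in F x -> x != 0 ->
  exists u, [/\ F (pc0 u), F (pc1 u), u != 0 & exists l, l != 0 /\ u = l *: x].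
Proof.
move=> [l [hl [h0 h1]]] hx; exists (l *: x); split => //.
  by rewrite scaler_eq0 negb_or hl.
by exists l.
Qed.

Lemma P1_mul (g : 'M[C]_2) y : (forall i j, F (g i j)) -> P1_in F y -> P1_in F (g *m y).
Proof.
move=> hg [l [hl [h0 h1]]]; exists l; split => //.
rewrite scalemxAr pcM0 pcM1; split; apply: FD => //; apply: FM => //.
Qed.

Lemma rank1 (M : 'M[C]_2) y : (forall i j, F (M i j)) -> \det M = 0 -> M *m y != 0 ->
  exists u, [/\ F (pc0 u), F (pc1 u), u != 0 & exists lam, M *m y = lam *: u].
Proof.
move=> hM; rewrite det2 => /eqP; rewrite subr_eq0 => /eqP hd hMy.
set a := M ord0 ord0 in hd *; set b := M ord0 ord_max in hd *.
set c := M ord_max ord0 in hd *; set d := M ord_max ord_max in hd *.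
case: (eqVneq a 0) => ha.
  case: (eqVneq c 0) => hc.
    exists (mkv b d); split; rewrite ?mkv0 ?mkv1; try apply: hM.
      apply: mkv_neq0; apply: NNPP => h; move/negP: hMy; apply.
      have hb : b = 0 by apply: NNPP => hb; apply: h; left; apply/eqP.
      have hd0 : d = 0 by apply: NNPP => hd1; apply: h; right; apply/eqP.
      apply/eqP; apply: cV2_eq.
        by rewrite pcM0 -/a -/b ha hb !mul0r addr0 /pc0 mxE.
      by rewrite pcM1 -/c -/d hc hd0 !mul0r addr0 /pc1 mxE.
    exists (pc1 y); apply: cV2_eq.
      by rewrite pcM0 pcZ0 mkv0 -/a -/b ha mul0r add0r mulrC.
    by rewrite pcM1 pcZ1 mkv1 -/c -/d hc mul0r add0r mulrC.
  have hb : b = 0 by move: hd; rewrite ha mul0r => /esym/eqP; rewrite mulf_eq0 (negbTE hc) orbF => /eqP.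
  exists (mkv a c); split; rewrite ?mkv0 ?mkv1; try apply: hM; first by apply: mkv_neq0; right.
  exists (pc0 y + d / c * pc1 y); apply: cV2_eq.
    by rewrite pcM0 pcZ0 mkv0 -/a -/b ha hb !mul0r mulr0 add0r.
  by rewrite pcM1 pcZ1 mkv1 -/c -/d; field.
exists (mkv a c); split; rewrite ?mkv0 ?mkv1; try apply: hM; first by apply: mkv_neq0; left.
have hd' : d = b * c / a by apply: (mulfI ha); rewrite hd; field.
exists (pc0 y + b / a * pc1 y); apply: cV2_eq.
  by rewrite pcM0 pcZ0 mkv0 -/a -/b; field.
by rewrite pcM1 pcZ1 mkv1 -/c -/d hd'; field.
Qed.

Lemma kernel_P1 (M : 'M[C]_2) y a b : (forall i j, F (M i j)) -> M a b != 0 ->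
  M *m y = 0 -> y != 0 -> P1_in F y.
Proof.
move=> hM hab hMy hy.
have e : M a ord0 * pc0 y + M a ord_max * pc1 y = 0.
  by have := congr1 (fun z : 'cV[C]_2 => z a ord0) hMy; rewrite /= !mxE sum2.
apply: (P1_of_prop (u := mkv (- M a ord_max) (M a ord0))); rewrite ?mkv0 ?mkv1 //.
- by apply: FN.
- apply: mkv_neq0; case: (I2_cases b) hab => -> h; [right|left] => //; by rewrite oppr_eq0.
- rewrite -[RHS]oppr0 -e /cr mkv0 mkv1 opprD -!mulNr addrC; congr (_ + _); by rewrite mulrC.
Qed.

End F.
End P1.


Section Closed.
Variables (R : realType) (C : fieldType) (v : C -> R).
Hypothesis hv : nonarch_abs v.
Notation cvg := (cvg_to v).
Notation mcvg := (mcvg v).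

Lemma P1_closed (F : C -> Prop) (u : nat -> 'cV[C]_2) x : local_subfield v F ->
  (forall n, u n != 0 /\ P1_in F (u n)) -> x != 0 -> P1_cvg v u x -> P1_in F x.
Proof.
move=> hl hu hx hc; have hF : subfield F by case: hl.
have H : forall n, exists r : 'cV[C]_2, [/\ F (pc0 r), F (pc1 r),
    (forall i, v (r i ord0) <= 1), (exists i, v (r i ord0) = 1) &
    exists l, l != 0 /\ r = l *: u n].
  move=> n; case: (hu n) => hn hP.
  have [q [F0q F1q hq [l [hl0 hql]]]] := P1_to_prop hP hn.
  have hFq : forall i, F (q i ord0).
    by move=> i; case: (I2_cases i) => ->.
  have [i1 hi1] : exists i1, q i1 ord0 != 0.
    by case: (cV_neq0 hq) => h; [exists ord0 | exists ord_max].
  have [c [Fc hc0 hle [i hi]]] := normalize hv (f := fun i => q i ord0) hF hFq hi1.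
  exists (c *: q); split.
  - by rewrite pcZ0; apply: FM.
  - by rewrite pcZ1; apply: FM.
  - by move=> j; rewrite mxE.
  - by exists i; rewrite mxE.
  - by exists (c * l); rewrite hql scalerA mulf_neq0.
pose r n := proj1_sig (constructive_indefinite_description _ (H n)).
have hr n : [/\ F (pc0 (r n)), F (pc1 (r n)),
    (forall i, v (r n i ord0) <= 1), (exists i, v (r n i ord0) = 1) &
    exists l, l != 0 /\ r n = l *: u n] := proj2_sig (constructive_indefinite_description _ (H n)).
have hb : forall (i : 'I_2) n, F (r n i ord0) /\ v (r n i ord0) <= 1.
  by move=> i n; have [? ? h _ _] := hr n; split; [case: (I2_cases i) => -> | apply: h].
have [phi [hphi hlim]] := fam_compact hv (Fi := fun _ : 'I_2 => F)
  (u := fun i n => r n i ord0) (fun=> hl) hb.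
have [x0 [[Fx0 _] h0]] := hlim ord0.
have [x1 [[Fx1 _] h1]] := hlim ord_max.
have hW : mcvg (fun n => r (phi n)) (mkv x0 x1).
  move=> i j; rewrite (ord1 j); case: (I2_cases i) => ->; rewrite mxE //.
have hW0 : mkv x0 x1 != 0.
  apply/negP => /eqP hW0.
  have e0 : x0 = 0 by rewrite -(mkv0 x0 x1) hW0 /pc0 mxE.
  have e1 : x1 = 0 by rewrite -(mkv1 x0 x1) hW0 /pc1 mxE.
  have [N hN] := ev_and (h0 _ ltr01) (h1 _ ltr01).
  have [_ _ _ [i hi] _] := hr (phi N).
  have [h0' h1'] := hN N (leqnn N); rewrite e0 e1 !subr0 in h0' h1'.
  by case: (I2_cases i) hi => -> hi; [move: h0' | move: h1']; rewrite hi ltxx.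
have hcv : P1_cvg v (fun n => r (phi n)) x.
  move=> e he; have [N hN] := P1_cvg_sub (inc_ge hphi) hc he.
  exists N => n hn; have [_ _ _ _ [l [hl0 ->]]] := hr (phi n).
  by rewrite chordalZl //; apply: hN.
have := chord_lim0 hv hW hW0 hx hcv.
by apply: P1_of_prop; rewrite ?mkv0 ?mkv1.
Qed.

End Closed.


Lemma det_nz_entry (C : fieldType) (g : 'M[C]_2) : \det g != 0 ->
  exists ab : 'I_2 * 'I_2, g ab.1 ab.2 != 0.
Proof.
move=> hd; apply: NNPP => h; move/negP: hd; apply.
have z : forall a b, g a b = 0.
  by move=> a b; apply/eqP; apply: NNPP => hab; apply: h; exists (a, b); exact/negP.
by rewrite det2 !z mulr0 subrr.
Qed.

Lemma mulmx_neq0 (C : fieldType) (g : 'M[C]_2) (y : 'cV[C]_2) : \det g != 0 -> y != 0 ->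
  g *m y != 0.
Proof.
move=> hg hy; apply/negP => /eqP e; move/negP: hy; apply; apply/eqP.
have hu : g \in unitmx by rewrite unitmxE unitfE.
by rewrite -(mulKmx hu y) e mulmx0.
Qed.

Lemma Fscalar (C : fieldType) (F : C -> Prop) (c : C) (i j : 'I_2) : subfield F -> F c ->
  F ((c%:M : 'M[C]_2) i j).
Proof. by move=> hF hc; rewrite mxE; case: (i == j); rewrite ?mulr1n ?mulr0n //; apply: F0. Qed.

Lemma FmulM (C : fieldType) (F : C -> Prop) (g h : 'M[C]_2) i j : subfield F ->
  (forall i j, F (g i j)) -> (forall i j, F (h i j)) -> F ((g *m h) i j).
Proof. by move=> hF hg hh; rewrite mxE; apply: Fsum2 => // k; apply: FM. Qed.

Section Forward.
Variables (R : realType) (C : fieldType) (v : C -> R).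
Hypothesis hv : nonarch_abs v.
Variables (S : finType) (F : S -> C -> Prop).
Hypothesis hF : forall s, local_subfield v (F s).
Variable Gam : (S -> 'M[C]_2) -> Prop.
Hypothesis hsub : PGL2_subgroup F Gam.
Hypothesis hdisc : PGL2_discrete v Gam.

Lemma hFs s : subfield (F s). Proof. by case: (hF s). Qed.

Lemma forward x : P1S_pt x -> limit_point v Gam x -> exists s, P1_in (F s) (x s).
Proof.
move=> hx [y [hy [gam [hG hdist hcv]]]].
case: hsub => hGL hZ hMul hInv.
have hN : forall j s, exists c, [/\ F s c, c != 0,
    forall ab : 'I_2 * 'I_2, v (c * gam j s ab.1 ab.2) <= 1 &
    exists ab : 'I_2 * 'I_2, v (c * gam j s ab.1 ab.2) = 1].
  move=> j s; have [hd hFg] := hGL _ (hG j) s.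
  have [ab hab] := det_nz_entry hd.
  exact: (normalize hv (f := fun ab : 'I_2 * 'I_2 => gam j s ab.1 ab.2) (hFs s) (fun ab => hFg _ _) hab).
pose c j s := proj1_sig (constructive_indefinite_description _ (hN j s)).
have hc j s : [/\ F s (c j s), c j s != 0,
    forall ab : 'I_2 * 'I_2, v (c j s * gam j s ab.1 ab.2) <= 1 &
    exists ab : 'I_2 * 'I_2, v (c j s * gam j s ab.1 ab.2) = 1]
  := proj2_sig (constructive_indefinite_description _ (hN j s)).
pose ghat j := mulS (fun s => (c j s)%:M) (gam j).
have ghatE j s : ghat j s = c j s *: gam j s by rewrite /ghat /mulS mul_scalar_mx.
have hGh j : Gam (ghat j).
  apply: hMul; last exact: hG.
  apply: hZ; last by move=> s; exists (c j s).
  move=> s; have [Fc c0 _ _] := hc j s; split.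
    by rewrite det_scalar expf_neq0.
  by move=> a b; apply: Fscalar => //; apply: hFs.
have hFgh j s a b : F s (ghat j s a b) /\ v (ghat j s a b) <= 1.
  have [Fc c0 hle _] := hc j s; have [_ hFg] := hGL _ (hG j) s.
  rewrite ghatE mxE; split; first by apply: FM => //; apply: hFs.
  exact: (hle (a, b)).
have [phi [hphi hlim]] := fam_compact hv (I := (S * 'I_2 * 'I_2)%type)
  (Fi := fun t => F t.1.1) (u := fun t n => ghat n t.1.1 t.1.2 t.2)
  (fun t => hF t.1.1) (fun t n => hFgh n t.1.1 t.1.2 t.2).
pose M s := \matrix_(a < 2, b < 2)
  proj1_sig (constructive_indefinite_description _ (hlim (s, a, b))).
have hM s a b : (F s (M s a b) /\ v (M s a b) <= 1) /\
    cvg_to v (fun n => ghat (phi n) s a b) (M s a b).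
  by rewrite /M mxE; exact: (proj2_sig (constructive_indefinite_description _ (hlim (s, a, b)))).
have hMc s : mcvg v (fun n => ghat (phi n) s) (M s) by move=> a b; case: (hM s a b).
have hMF s a b : F s (M s a b) by case: (hM s a b) => [[]].
have hM0 s : exists ab : 'I_2 * 'I_2, M s ab.1 ab.2 != 0.
  apply: NNPP => h.
  have z : forall ab : 'I_2 * 'I_2, M s ab.1 ab.2 = 0.
    by move=> ab; apply/eqP; apply: NNPP => hab; apply: h; exists ab; exact/negP.
  have [N hN0] := ev_all (fun ab : 'I_2 * 'I_2 => hMc s ab.1 ab.2 _ ltr01).
  have [_ _ _ [ab hab]] := hc (phi N) s.
  have := hN0 N (leqnn N) ab; by rewrite z subr0 ghatE mxE hab ltxx.
case: (classic (exists s, \det (M s) = 0)) => [[s hs0]|hnd]; last first.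
  have hdet s : \det (M s) != 0 by apply/eqP => e; apply: hnd; exists s.
  case: hdisc => e [he hd].
  have hev : forall s, ev (fun n => forall i j, (n <= i)%N -> (n <= j)%N ->
      forall a b, v ((invmx (ghat (phi i) s) *m ghat (phi j) s) a b
        - (1%:M : 'M[C]_2) a b) < e).
    move=> s; have [N1 hN1] := near1 hv (hMc s) (hdet s) he.
    by exists N1 => n hn i j hi hj; apply: hN1; apply: leq_trans hn _.
  have [N hNN] := ev_all hev.
  have hcent := hd _ (hMul _ _ (hInv _ (hGh (phi N))) (hGh (phi N.+1)))
    (fun s a b => hNN N (leqnn N) s N N.+1 (leqnn N) (leqnSn N) a b).
  exfalso; apply: (hdist (phi N) (phi N.+1)); first by rewrite neq_ltn hphi.
  move=> s; have [l hl] := hcent s.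
  rewrite /mulS /invS in hl.
  have [hdi _] := hGL _ (hGh (phi N)) s.
  have [hdj _] := hGL _ (hGh (phi N.+1)) s.
  have hu : ghat (phi N) s \in unitmx by rewrite unitmxE unitfE.
  have e1 : ghat (phi N.+1) s = l *: ghat (phi N) s.
    by rewrite -(mulKVmx hu (ghat (phi N.+1) s)) hl mul_mx_scalar.
  have hl0 : l != 0.
    by apply/eqP => l0; move: hdj; rewrite e1 l0 scale0r det0 eqxx.
  have [_ cj0 _ _] := hc (phi N.+1) s; have [_ ci0 _ _] := hc (phi N) s.
  exists ((c (phi N.+1) s)^-1 * (l * c (phi N) s)); split.
    by rewrite !mulf_neq0 ?invr_neq0.
  rewrite !ghatE in e1.
  by rewrite -[LHS](scalerK cj0) e1 !scalerA mulrA.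
case: (classic (P1_in (F s) (y s))) => hPy.
  exists s; apply: (P1_closed hv (u := fun n => gam (phi n) s *m y s) (hF s) _ (hx s)).
    move=> n; have [hd hFg] := hGL _ (hG (phi n)) s; split.
      exact: mulmx_neq0.
    exact: P1_mul (hFs s) _ _ hFg hPy.
  exact: P1_cvg_sub (inc_ge hphi) (hcv s).
exists s.
have hMy : M s *m y s != 0.
  apply/negP => /eqP e; apply: hPy; have [ab hab] := hM0 s.
  exact: (@kernel_P1 _ _ (hFs s) (M s) (y s) ab.1 ab.2 (hMF s) hab e (hy s)).
have [u [Fu0 Fu1 hu0 [lam hlam]]] := rank1 (hMF s) hs0 hMy.
have hw : mcvg v (fun n => ghat (phi n) s *m y s) (M s *m y s).
  exact: (mcvg_mul hv (A := fun n => ghat (phi n) s) (B := fun _ => y s) (hMc s) (mcvg_cst hv (y s))).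
have hcw : P1_cvg v (fun n => ghat (phi n) s *m y s) (x s).
  move=> e he; have [N hN'] := P1_cvg_sub (inc_ge hphi) (hcv s) he.
  exists N => n hn; have [_ c0 _ _] := hc (phi n) s.
  by rewrite ghatE -scalemxAl chordalZl //; apply: hN'.
have hcr := chord_lim0 hv hw hMy (hx s) hcw.
rewrite hlam crZl in hcr.
have hlam0 : lam != 0 by apply/eqP => l0; move: hMy; rewrite hlam l0 scale0r eqxx.
move/eqP: hcr; rewrite mulf_eq0 (negbTE hlam0) /= => /eqP hcr.
exact: (@P1_of_prop _ _ (hFs s) u (x s) Fu0 Fu1 hu0 (hx s) hcr).
Qed.

End Forward.


Definition mk22 (C : fieldType) (a b c d : C) : 'M[C]_2 :=
  \matrix_(i, j) if i == ord0 then (if j == ord0 then a else b) else (if j == ord0 then c else d).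
Section MK.
Variables (C : fieldType) (a b c d : C).
Lemma mk00 : mk22 a b c d ord0 ord0 = a. Proof. by rewrite mxE. Qed.
Lemma mk01 : mk22 a b c d ord0 ord_max = b. Proof. by rewrite mxE. Qed.
Lemma mk10 : mk22 a b c d ord_max ord0 = c. Proof. by rewrite mxE. Qed.
Lemma mk11 : mk22 a b c d ord_max ord_max = d. Proof. by rewrite mxE. Qed.
Lemma det_mk22 : \det (mk22 a b c d) = a * d - b * c.
Proof. by rewrite det2 mk00 mk01 mk10 mk11. Qed.
Lemma F_mk22 (F : C -> Prop) : F a -> F b -> F c -> F d -> forall i j, F (mk22 a b c d i j).
Proof.
move=> ha hb hc hd i j; case: (I2_cases i) => ->; case: (I2_cases j) => ->;
  by rewrite ?mk00 ?mk01 ?mk10 ?mk11.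
Qed.
End MK.

Lemma P1_cvg_ext (R : realType) (C : fieldType) (v : C -> R) u w x :
  (forall n, u n = w n) -> P1_cvg v w x -> P1_cvg v u x.
Proof. by move=> h hw e /hw [N hN]; exists N => n hn; rewrite h; apply: hN. Qed.

Lemma cr_self (C : fieldType) (x : 'cV[C]_2) : cr x x = 0.
Proof. by rewrite /cr mulrC subrr. Qed.

Section Backward.
Variables (R : realType) (C : fieldType) (v : C -> R).
Hypothesis hv : nonarch_abs v.
Variables (S : finType) (F : S -> C -> Prop).
Hypothesis hF : forall s, local_subfield v (F s).
Variable Gam : (S -> 'M[C]_2) -> Prop.
Hypothesis hsub : PGL2_subgroup F Gam.
Hypothesis hcoc : PGL2_cocompact v F Gam.

Lemma exA s0 (a : 'cV[C]_2) : F s0 (pc0 a) -> F s0 (pc1 a) -> a != 0 ->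
  exists A : 'M[C]_2, [/\ forall i j, F s0 (A i j), \det A != 0 & A *m mkv 1 0 = a].
Proof.
move=> h0 h1 ha; have hF0 := hFs hF s0.
case: (eqVneq (pc0 a) 0) => ha0.
  have ha1 : pc1 a != 0 by case: (cV_neq0 ha) => // h; move: h; rewrite ha0 eqxx.
  exists (mk22 (pc0 a) 1 (pc1 a) 0); split.
  - by apply: F_mk22 => //; [apply: F1 | apply: F0].
  - by rewrite det_mk22 ha0 mul0r sub0r mul1r oppr_eq0.
  - apply: cV2_eq; rewrite ?pcM0 ?pcM1 mkv0 mkv1 ?mk00 ?mk01 ?mk10 ?mk11; by rewrite mulr1 mulr0 addr0.
exists (mk22 (pc0 a) 0 (pc1 a) 1); split.
- by apply: F_mk22 => //; [apply: F0 | apply: F1].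
- by rewrite det_mk22 mulr1 mul0r subr0.
- apply: cV2_eq; rewrite ?pcM0 ?pcM1 mkv0 mkv1 ?mk00 ?mk01 ?mk10 ?mk11; by rewrite mulr1 mulr0 addr0.
Qed.

Lemma backward x s0 : P1S_pt x -> P1_in (F s0) (x s0) -> limit_point v Gam x.
Proof.
move=> hx [l [hl0 [ha0 ha1]]].
have hF0 := hFs hF s0.
set a := l *: x s0 in ha0 ha1.
have ha : a != 0 by rewrite scaler_eq0 negb_or hl0 hx.
have [A [hAF hAd hAe]] := exA ha0 ha1 ha.
have hAu : A \in unitmx by rewrite unitmxE unitfE.
case: (hF s0) => _ [pi [Fpi /andP[hpi0 hpi1]]] _.
have pi0 : pi != 0 by rewrite -(v_eq0 hv) gt_eqF.
pose D n := mk22 1 0 0 (pi ^+ n).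
pose h n : S -> 'M[C]_2 := fun s => if s == s0 then A *m D n else 1%:M.
have hGLh n : GL2S F (h n).
  move=> s; rewrite /h; case: (eqVneq s s0) => [->|hs]; split.
  - by rewrite det_mulmx det_mk22 mulr0 subr0 mul1r mulf_neq0 // expf_neq0.
  - move=> i j; apply: FmulM => //; apply: F_mk22; [exact: (F1 hF0) | exact: (F0 hF0) | exact: (F0 hF0) | exact: (FX hF0)].
  - by rewrite det1 oner_neq0.
  - by move=> i j; apply: Fscalar; [apply: hFs | apply: F1; apply: hFs].
case: hcoc => K [hKGL hKc hdec].
pose gm n := proj1_sig (constructive_indefinite_description _ (hdec _ (hGLh n))).
have hk n : exists k, [/\ Gam (gm n), K k & h n = mulS (gm n) k]
  := proj2_sig (constructive_indefinite_description _ (hdec _ (hGLh n))).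
pose km n := proj1_sig (constructive_indefinite_description _ (hk n)).
have hgk n : [/\ Gam (gm n), K (km n) & h n = mulS (gm n) (km n)]
  := proj2_sig (constructive_indefinite_description _ (hk n)).
have [phi [hphi [k [hkK hkc]]]] := hKc km (fun n => let: And3 _ h2 _ := hgk n in h2).
have hkm s : mcvg v (fun n => km (phi n) s) (k s) by move=> i j; apply: hkc.
have hkd s : \det (k s) != 0 by case: (hKGL _ hkK s).
have hkmu n s : km n s \in unitmx.
  by have [_ h2 _] := hgk n; case: (hKGL _ h2 s) => hd _; rewrite unitmxE unitfE.
have hgE n s : gm n s = h n s *m invmx (km n s).
  by have [_ _ e] := hgk n; rewrite e /mulS mulmxK.
have [N hN] := near1 hv (hkm s0) (hkd s0) ltr01.
pose e s := if s == s0 then mkv (1 : C) 0 else x s.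
have he s : e s != 0.
  rewrite /e; case: (s == s0); last exact: hx.
  by apply: mkv_neq0; left; apply: oner_neq0.
exists (fun s => k s *m e s); split.
  by move=> s; apply: mulmx_neq0.
exists (fun n => gm (phi (n + N))); split.
- by move=> j; have [h1 _ _] := hgk (phi (j + N)).
- move=> i j hij hpe; have [c [hc0 hce]] := hpe s0.
  set p := phi (i + N) in hce *; set q := phi (j + N) in hce *.
  have hnear := hN (i + N)%N (j + N)%N (leq_addl _ _) (leq_addl _ _).
  rewrite -/p -/q in hnear.
  have hD : D q = c *: (D p *m (invmx (km p s0) *m km q s0)).
    have [_ _ e1] := hgk q.
    have e2 : A *m D q = gm q s0 *m km q s0.
      by have := congr1 (fun f => f s0) e1; rewrite /h /mulS eqxx.
    rewrite -(mulKmx hAu (D q)) e2 hce hgE /h eqxx.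
    by rewrite -!scalemxAl -scalemxAr !mulmxA mulVmx // mul1mx.
  move: hD hnear; move: (invmx (km p s0) *m km q s0) => Nn hD hnear.
  have hn1 : forall a, v (Nn a a) = 1.
    move=> a0; rewrite -(v1 hv); apply: (v_eq_of_lt hv).
    by rewrite (v1 hv); have := hnear a0 a0; rewrite mxE eqxx mulr1n.
  have e00 := congr1 (fun M : 'M[C]_2 => M ord0 ord0) hD.
  have e11 := congr1 (fun M : 'M[C]_2 => M ord_max ord_max) hD.
  rewrite /D !mxE sum2 mk00 mk01 /= in e00.
  rewrite /D !mxE sum2 mk11 mk10 /= in e11.
  rewrite mul1r mul0r addr0 in e00.
  rewrite mul0r add0r in e11.
  have hvc : v c = 1.
    by have := congr1 v e00; rewrite (vM hv) hn1 mulr1 (v1 hv) => <-.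
  have := congr1 v e11; rewrite !(vM hv) !(vX hv) hvc hn1 mul1r mulr1.
  move/(ieexprIn hpi0 (negbT (lt_eqF hpi1))) => /(phi_inc_inj hphi) /eqP.
  by rewrite eqn_add2r eq_sym (negbTE hij).
- move=> s.
  have hz : mcvg v (fun n => invmx (km (phi (n + N)) s) *m (k s *m e s)) (e s).
    have hku : k s \in unitmx by rewrite unitmxE unitfE.
    have := mcvg_mul hv (A := fun n => invmx (km (phi (n + N)) s)) (B := fun _ => k s *m e s)
      (mcvg_inv hv (A := fun n => km (phi (n + N)) s)
        (mcvg_sub (A := fun n => km (phi n) s) (fun n => leq_addr N n) (hkm s)) (hkd s))
      (mcvg_cst hv (k s *m e s)).
    by rewrite mulKmx.
  case: (eqVneq s s0) => [es|hs]; first subst s.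
    have es0 : e s0 = mkv 1 0 by rewrite /e eqxx.
    rewrite es0 in hz *.
    pose w n := D (phi (n + N)) *m (invmx (km (phi (n + N)) s0) *m (k s0 *m mkv 1 0)).
    have hw : mcvg v w (mkv 1 0).
      move=> i j; have -> : j = ord0 by apply/val_inj; case: j => [[]]. case: (I2_cases i) => ->.
        apply: (cvg_evq (u := fun n => pc0 (invmx (km (phi (n + N)) s0) *m (k s0 *m mkv 1 0)))).
          by exists 0%N => n _; rewrite /w -/(pc0 _) pcM0 /D mk00 mk01 mul1r mul0r addr0.
        exact: hz ord0 ord0.
      have h0 : cvg_to v (fun n => pc1 (invmx (km (phi (n + N)) s0) *m (k s0 *m mkv 1 0))) 0.
        by have := hz ord_max ord0; rewrite -/(pc1 _) mkv1.
      rewrite -/(pc1 (mkv 1 0)) mkv1.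
      apply: (cvg0_le (w := fun n => w n ord_max ord0) _ h0) => n.
      rewrite -/(pc1 (w n)) /w pcM1 /D mk10 mk11 mul0r add0r (vM hv) (vX hv).
      apply: le_trans (_ : 1 * _ <= _); last by rewrite mul1r.
      by rewrite ler_wpM2r ?v_ge0 // exprn_ile1 // ltW.
    have hAw := mcvg_mul hv (A := fun _ => A) (B := w) (mcvg_cst hv A) hw.
    rewrite hAe in hAw.
    apply: (P1_cvg_ext (w := fun n => A *m w n)).
      by move=> n; rewrite hgE /h eqxx /w !mulmxA.
    apply: (chord_cvg0 hv hAw ha (hx s0)).
    by rewrite /a crZl cr_self mulr0.
  have es : e s = x s by rewrite /e (negbTE hs).
  rewrite es in hz.
  apply: (P1_cvg_ext (w := fun n => invmx (km (phi (n + N)) s) *m (k s *m e s))).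
    by move=> n; rewrite hgE /h (negbTE hs) mul1mx mulmxA.
  rewrite es; exact: (chord_cvg0 hv hz (hx s) (hx s) (cr_self _)).
Qed.


End Backward.

Theorem proposition2p10 (R : realType) (C : fieldType) (v : C -> R) (p : nat)
  (hp : prime p) (hC : completed_alg_closure_Qp_or_FpT v p)
  (S : finType) (hS : (0 < #|S|)%N) (F : S -> C -> Prop)
  (hF : forall s, local_subfield v (F s))
  (Gam : (S -> 'M[C]_2) -> Prop)
  (hsub : PGL2_subgroup F Gam) (hdisc : PGL2_discrete v Gam)
  (hcoc : PGL2_cocompact v F Gam) :
  plectic_with v F Gam (fun s => P1_in (F s)).
Proof.
have hv : nonarch_abs v by case: hC.
split; first by [].
move=> x hx; split.
- move=> hl; exact: (forward hv hF hsub hdisc hx hl).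
- by case=> s hs; exact: (backward hv hF hcoc hx hs).
Qed.
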